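(* Let $k\ge3$ and let $D\subseteq\mathbb{D}$ be an open set with the $k$-th Hindmarsh property. If $\mathcal{Z}\subset D$ is a discrete set in $D$, then $D\setminus\mathcal{Z}$ also has the $k$-th Hindmarsh property.
   Context: $\mathbb{D}$ is the open unit disk. A set $\mathcal{Z}\subset D$ is discrete in $D$ if it is at most countable with no accumulation points in $D$. A Schur function is an analytic $S:\mathbb{D}\to\mathbb{C}$ with $|S|\le1$. Pick matrix: $P_k(f;z_1,\dots,z_k)=\left[\frac{1-f(z_i)\overline{f(z_j)}}{1-z_i\overline{z_j}}\right]_{i,j=1}^k$. For an integer $k\ge3$, an open set $D\subseteq\mathbb{D}$ has the $k$-th Hindmarsh property if every function $f:D\to\mathbb{C}$ such that $P_k(f;z_1,\dots,z_k)$ is positive semidefinite for every choice of distinct $z_1,\dots,z_k\in D$ admits an extension to a Schur function on $\mathbb{D}$. Hindmarsh's theorem (may be assumed): if $U\subseteq\mathbb{D}$ is open and $f:U\to\mathbb{C}$ has $P_3(f;z_1,z_2,z_3)\ge0$ for all $z_1,z_2,z_3\in U$, then $f$ is analytic on $U$ with $|f|\le1$. *)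

(* Defs.v *)
From Stdlib Require Import Reals.
From Coquelicot Require Import Coquelicot.
Open Scope R_scope.

Fixpoint csum (n : nat) (f : nat -> C) : C :=
  match n with
  | O => 0%C
  | S m => Cplus (csum m f) (f m)
  end.

Definition unit_disk (z : C) : Prop := Cmod z < 1.

Definition C_open (D : C -> Prop) : Prop :=
  forall z, D z -> exists r, 0 < r /\ forall w, Cmod (Cminus w z) < r -> D w.

Definition schur_function (S : C -> C) : Prop :=
  (forall z, unit_disk z -> ex_derive (K := C_AbsRing) S z) /\
  (forall z, unit_disk z -> Cmod (S z) <= 1).

Definition pick_entry (f : C -> C) (zs : nat -> C) (i j : nat) : C :=
  Cdiv (Cminus 1 (Cmult (f (zs i)) (Cconj (f (zs j)))))
       (Cminus 1 (Cmult (zs i) (Cconj (zs j)))).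

Definition psd (k : nat) (M : nat -> nat -> C) : Prop :=
  forall c : nat -> C,
    let q := csum k (fun i => csum k (fun j => Cmult (Cmult (Cconj (c i)) (M i j)) (c j))) in
    Im q = 0 /\ 0 <= Re q.

(* the k-th Hindmarsh property of D (D is assumed open, D ⊆ unit disk, separately) *)
Definition hindmarsh_property (k : nat) (D : C -> Prop) : Prop :=
  forall f : C -> C,
    (forall zs : nat -> C,
        (forall i, (i < k)%nat -> D (zs i)) ->
        (forall i j, (i < k)%nat -> (j < k)%nat -> i <> j -> zs i <> zs j) ->
        psd k (pick_entry f zs)) ->
    exists S : C -> C, schur_function S /\ forall z, D z -> S z = f z.

Definition discrete_in (D Z : C -> Prop) : Prop :=
  (forall z, Z z -> D z) /\
  (exists g : nat -> C, forall z, Z z -> exists n, g n = z) /\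
  (forall w, D w -> exists r, 0 < r /\
      forall z, Z z -> Cmod (Cminus z w) < r -> z = w).

(* Main.v *)
Require Import Defs.
From Stdlib Require Import Reals Lra Lia Psatz Classical.
From Coquelicot Require Import Coquelicot.
Open Scope R_scope.


Definition tt (n:nat) : R := / INR (S n).
Lemma tt_pos n : 0 < tt n.
Proof. unfold tt. apply Rinv_0_lt_compat. apply lt_0_INR. lia. Qed.
Lemma tt_lim : is_lim_seq tt 0.
Proof.
  unfold tt. replace (Finite 0) with (Rbar_inv p_infty) by reflexivity.
  apply is_lim_seq_inv. 2: discriminate.
  apply (is_lim_seq_incr_1 INR). apply is_lim_seq_INR.
Qed.
Lemma tt_small eps : 0 < eps -> eventually (fun n => tt n < eps).
Proof.
  intro He. pose proof tt_lim as H. apply is_lim_seq_spec in H.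
  destruct (H (mkposreal eps He)) as [N HN]. exists N. intros n Hn.
  specialize (HN n Hn). simpl in HN. rewrite Rminus_0_r in HN.
  pose proof (tt_pos n). rewrite Rabs_pos_eq in HN; lra.
Qed.

Definition Cconv (u : nat -> C) (l : C) :=
  is_lim_seq (fun n => fst (u n)) (fst l) /\ is_lim_seq (fun n => snd (u n)) (snd l).

Lemma Cconv_const (c : C) : Cconv (fun _ => c) c.
Proof. split; apply is_lim_seq_const. Qed.

Lemma Cconv_plus u v a b : Cconv u a -> Cconv v b -> Cconv (fun n => Cplus (u n) (v n)) (Cplus a b).
Proof.
  intros [H1 H2] [H3 H4]. split; simpl.
  - exact (is_lim_seq_plus' _ _ _ _ H1 H3).
  - exact (is_lim_seq_plus' _ _ _ _ H2 H4).
Qed.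

Lemma Cconv_opp u a : Cconv u a -> Cconv (fun n => Copp (u n)) (Copp a).
Proof.
  intros [H1 H2]. split; simpl.
  - exact (proj1 (is_lim_seq_opp _ _) H1).
  - exact (proj1 (is_lim_seq_opp _ _) H2).
Qed.

Lemma Cconv_minus u v a b : Cconv u a -> Cconv v b -> Cconv (fun n => Cminus (u n) (v n)) (Cminus a b).
Proof. intros. unfold Cminus. apply Cconv_plus; auto. apply Cconv_opp; auto. Qed.

Lemma Cconv_mult u v a b : Cconv u a -> Cconv v b -> Cconv (fun n => Cmult (u n) (v n)) (Cmult a b).
Proof.
  intros [H1 H2] [H3 H4]. split; simpl.
  - apply is_lim_seq_minus'; apply is_lim_seq_mult'; auto.
  - apply is_lim_seq_plus'; apply is_lim_seq_mult'; auto.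
Qed.

Lemma Cconv_conj u a : Cconv u a -> Cconv (fun n => Cconj (u n)) (Cconj a).
Proof.
  intros [H1 H2]. split; simpl; auto. exact (proj1 (is_lim_seq_opp _ _) H2).
Qed.

Lemma Cconv_inv u a : Cconv u a -> a <> 0%C -> Cconv (fun n => Cinv (u n)) (Cinv a).
Proof.
  intros [H1 H2] Ha.
  assert (Hd : fst a ^ 2 + snd a ^ 2 <> 0).
  { intro E. apply Ha. destruct a as [x y]; simpl in *.
    assert (x = 0) by nra. assert (y = 0) by nra. subst. reflexivity. }
  assert (HD : is_lim_seq (fun n => fst (u n) ^ 2 + snd (u n) ^ 2) (fst a ^ 2 + snd a ^ 2)).
  { apply (is_lim_seq_ext (fun n => fst (u n) * fst (u n) + snd (u n) * snd (u n))).
    intros; ring.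
    replace (fst a ^ 2 + snd a ^ 2) with (fst a * fst a + snd a * snd a) by ring.
    apply is_lim_seq_plus'; apply is_lim_seq_mult'; auto. }
  split; simpl.
  - apply is_lim_seq_div'; auto.
  - apply is_lim_seq_div'; auto. exact (proj1 (is_lim_seq_opp _ _) H2).
Qed.

Lemma Cconv_div u v a b : Cconv u a -> Cconv v b -> b <> 0%C -> Cconv (fun n => Cdiv (u n) (v n)) (Cdiv a b).
Proof. intros. unfold Cdiv. apply Cconv_mult; auto. apply Cconv_inv; auto. Qed.

Lemma Cconv_csum k (g : nat -> nat -> C) (L : nat -> C) :
  (forall i, (i < k)%nat -> Cconv (fun n => g n i) (L i)) ->
  Cconv (fun n => csum k (g n)) (csum k L).
Proof.
  induction k; intros H; simpl.
  - apply Cconv_const.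
  - apply Cconv_plus. apply IHk. intros; apply H; lia. apply H; lia.
Qed.


Ltac ceq := apply injective_projections; simpl; try ring.

Lemma csum_ext k (g h : nat -> C) : (forall i, (i < k)%nat -> g i = h i) -> csum k g = csum k h.
Proof. induction k; intros H; simpl; auto. rewrite IHk, H; auto; intros; apply H; lia. Qed.

Lemma csum_zero k (h : nat -> C) : (forall j, (j < k)%nat -> h j = 0%C) -> csum k h = 0%C.
Proof. induction k; intros H; simpl; auto. rewrite IHk, H; try lia. ceq. intros; apply H; lia. Qed.

Lemma csum_two k (g : nat -> C) : (2 <= k)%nat -> (forall i, (2 <= i)%nat -> (i < k)%nat -> g i = 0%C) ->
  csum k g = Cplus (g 0%nat) (g 1%nat).
Proof.
  induction k; intros Hk H. lia.
  destruct (Nat.eq_dec k 1). subst. simpl. ceq.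
  simpl. rewrite IHk by (try lia; intros; apply H; lia). rewrite (H k) by lia. ceq.
Qed.

Definition q2 (M : nat -> nat -> C) (c0 c1 : C) : C :=
  Cplus (Cplus (Cmult (Cmult (Cconj c0) (M 0%nat 0%nat)) c0) (Cmult (Cmult (Cconj c0) (M 0%nat 1%nat)) c1))
        (Cplus (Cmult (Cmult (Cconj c1) (M 1%nat 0%nat)) c0) (Cmult (Cmult (Cconj c1) (M 1%nat 1%nat)) c1)).

Lemma psd_two k M c0 c1 : (2 <= k)%nat -> psd k M -> 0 <= fst (q2 M c0 c1).
Proof.
  intros Hk H.
  set (c := fun i => match i with O => c0 | 1%nat => c1 | _ => 0%C end).
  pose proof (H c) as Hc. cbv zeta in Hc. destruct Hc as [_ H2]. unfold Re in H2.
  assert (E1 : forall i, (2 <= i)%nat -> (i < k)%nat -> csum k (fun j => Cmult (Cmult (Cconj (c i)) (M i j)) (c j)) = 0%C).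
  { intros i Hi _. apply csum_zero. intros j _. destruct i as [|[|i]]; try lia. simpl. ceq. }
  assert (E2 : forall i0, (2 <= i0)%nat -> (i0 < k)%nat -> ((fun j => Cmult (Cmult (Cconj (c 0%nat)) (M 0%nat j)) (c j)) i0) = 0%C).
  { intros i Hi _. destruct i as [|[|i]]; try lia. simpl. ceq. }
  assert (E3 : forall i0, (2 <= i0)%nat -> (i0 < k)%nat -> ((fun j => Cmult (Cmult (Cconj (c 1%nat)) (M 1%nat j)) (c j)) i0) = 0%C).
  { intros i Hi _. destruct i as [|[|i]]; try lia. simpl. ceq. }
  rewrite (csum_two k (fun i => csum k (fun j => Cmult (Cmult (Cconj (c i)) (M i j)) (c j)))%C Hk E1) in H2.
  rewrite (csum_two k _ Hk E2), (csum_two k _ Hk E3) in H2.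
  exact H2.
Qed.

Definition n2 (z : C) : R := fst z * fst z + snd z * snd z.

Lemma q2_eval (A Dd : R) (mu c0 c1 : C) M :
  M 0%nat 0%nat = (A, 0) -> M 1%nat 1%nat = (Dd, 0) -> M 0%nat 1%nat = mu -> M 1%nat 0%nat = Cconj mu ->
  fst (q2 M c0 c1) = A * n2 c0 + Dd * n2 c1 + 2 * fst (Cmult (Cmult (Cconj c0) mu) c1).
Proof. intros H1 H2 H3 H4. unfold q2, n2. rewrite H1,H2,H3,H4. simpl. ring. Qed.

Lemma psd2_ineq k M A Dd mu : (2 <= k)%nat -> psd k M ->
  M 0%nat 0%nat = (A, 0) -> M 1%nat 1%nat = (Dd, 0) -> M 0%nat 1%nat = mu -> M 1%nat 0%nat = Cconj mu ->
  0 <= A /\ 0 <= Dd /\ n2 mu <= A * Dd.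
Proof.
  intros Hk H H1 H2 H3 H4.
  assert (HQ : forall c0 c1, 0 <= A * n2 c0 + Dd * n2 c1 + 2 * fst (Cmult (Cmult (Cconj c0) mu) c1)).
  { intros. rewrite <- (q2_eval A Dd mu c0 c1 M); auto. apply psd_two with k; auto. }
  pose proof (HQ (1,0) 0%C) as HA. pose proof (HQ 0%C (1,0)) as HD.
  unfold n2 in HA, HD; simpl in HA, HD.
  assert (HAp : 0 <= A) by nra. assert (HDp : 0 <= Dd) by nra.
  split; auto. split; auto.
  assert (Hs : forall s, 0 <= A * (s*s) - 2 * s * n2 mu + Dd * n2 mu).
  { intro s. pose proof (HQ (s,0) (Copp (Cconj mu))) as Hq.
    unfold n2 in *; destruct mu as [m1 m2]; simpl in *. nra. }
  assert (Hm : 0 <= n2 mu) by (unfold n2; nra).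
  destruct (Req_dec A 0) as [HA0|HA0].
  - subst A. pose proof (Hs Dd). pose proof (Hs (Dd+1)). nra.
  - pose proof (Hs (n2 mu / A)) as Hs'.
    assert (0 < A) by lra.
    assert (E : A * (n2 mu / A * (n2 mu / A)) - 2 * (n2 mu / A) * n2 mu + Dd * n2 mu
              = n2 mu * (A * Dd - n2 mu) / A) by (field; lra).
    rewrite E in Hs'.
    assert (0 <= n2 mu * (A * Dd - n2 mu)).
    { apply Rmult_le_reg_r with (/ A). apply Rinv_0_lt_compat; lra. rewrite Rmult_0_l. exact Hs'. }
    destruct (Req_dec (n2 mu) 0) as [E0|E0]. rewrite E0; nra. nra.
Qed.


Lemma Cdiv_real (x y : C) : snd x = 0 -> snd y = 0 -> fst y <> 0 -> Cdiv x y = (fst x / fst y, 0).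
Proof. destruct x as [x1 x2], y as [y1 y2]; simpl; intros -> -> H. unfold Cdiv, Cinv, Cmult; simpl. ceq; field; auto. Qed.

Lemma Cconj_div (x y : C) : y <> 0%C -> Cconj (Cdiv x y) = Cdiv (Cconj x) (Cconj y).
Proof.
  destruct x as [x1 x2], y as [y1 y2]; intro H.
  assert (y1 * y1 + y2 * y2 <> 0).
  { intro E. apply H. assert (y1 = 0) by nra. assert (y2 = 0) by nra. subst; reflexivity. }
  unfold Cdiv, Cinv, Cmult, Cconj; simpl. ceq; field; nra.
Qed.

Lemma n2_div (x y : C) : y <> 0%C -> n2 (Cdiv x y) = n2 x / n2 y.
Proof.
  destruct x as [x1 x2], y as [y1 y2]; intro H.
  assert (y1 * y1 + y2 * y2 <> 0).
  { intro E. apply H. assert (y1 = 0) by nra. assert (y2 = 0) by nra. subst; reflexivity. }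
  unfold n2, Cdiv, Cinv, Cmult; simpl. field; nra.
Qed.

Lemma Delta_pos (z w : C) : n2 z < 1 -> n2 w < 1 -> 0 < n2 (Cminus 1 (Cmult z (Cconj w))).
Proof.
  destruct z as [z1 z2], w as [w1 w2]; unfold n2; simpl; intros.
  assert (z1*w1 + z2*w2 < 1) by (pose proof (Rle_0_sqr (z1-w1)); pose proof (Rle_0_sqr (z2-w2)); unfold Rsqr in *; nra).
  pose proof (Rle_0_sqr (z1 * - w2 + z2 * w1)). unfold Rsqr in *. nra.
Qed.

Lemma nz_of_n2 (y : C) : 0 < n2 y -> y <> 0%C.
Proof. intros H E; subst; unfold n2 in H; simpl in H; lra. Qed.

Lemma key_ineq k (f : C -> C) (zs : nat -> C) :
  (2 <= k)%nat -> psd k (pick_entry f zs) -> n2 (zs 0%nat) < 1 -> n2 (zs 1%nat) < 1 ->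
  n2 (Cminus (f (zs 0%nat)) (f (zs 1%nat))) * n2 (Cminus 1 (Cmult (zs 0%nat) (Cconj (zs 1%nat))))
  <= 4 * n2 (Cminus (zs 0%nat) (zs 1%nat)).
Proof.
  intros Hk Hp Hz Hw.
  set (z := zs 0%nat) in *. set (w := zs 1%nat) in *.
  set (a := f z). set (b := f w).
  set (mu := Cdiv (Cminus 1 (Cmult a (Cconj b))) (Cminus 1 (Cmult z (Cconj w)))).
  assert (Hd := Delta_pos z w Hz Hw).
  assert (Hd' := Delta_pos w z Hw Hz).
  destruct (psd2_ineq k (pick_entry f zs) ((1 - n2 a) / (1 - n2 z)) ((1 - n2 b) / (1 - n2 w)) mu Hk Hp)
    as [HA [HD Hm]].
  - unfold pick_entry. fold z a. rewrite Cdiv_real;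
    [ f_equal; unfold n2, Rdiv; simpl; f_equal; [ring| f_equal; ring] | simpl; ring | simpl; ring
    | simpl; unfold n2 in Hz; nra ].
  - unfold pick_entry. fold w b. rewrite Cdiv_real;
    [ f_equal; unfold n2, Rdiv; simpl; f_equal; [ring| f_equal; ring] | simpl; ring | simpl; ring
    | simpl; unfold n2 in Hw; nra ].
  - reflexivity.
  - unfold pick_entry, mu. fold z w a b. rewrite Cconj_div by (apply nz_of_n2; auto).
    f_equal; ceq.
  - unfold mu in Hm. rewrite n2_div in Hm by (apply nz_of_n2; auto).
    clearbody a b. clear mu Hp.
    destruct a as [a1 a2], b as [b1 b2], z as [z1 z2], w as [w1 w2].
    unfold n2 in *; simpl in *.
    set (P := 1 - (z1*z1+z2*z2)) in *. set (Q := 1 - (w1*w1+w2*w2)) in *.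
    assert (HP : 0 < P) by (unfold P; lra). assert (HQ : 0 < Q) by (unfold Q; lra).
    set (al := 1 - (a1*a1+a2*a2)) in *. set (be := 1 - (b1*b1+b2*b2)) in *.
    assert (Hal : 0 <= al). { apply Rmult_le_reg_r with (/P). apply Rinv_0_lt_compat; lra. rewrite Rmult_0_l. exact HA. }
    assert (Hbe : 0 <= be). { apply Rmult_le_reg_r with (/Q). apply Rinv_0_lt_compat; lra. rewrite Rmult_0_l. exact HD. }
    set (N2 := (1 + - (a1 * b1 - a2 * - b2)) * (1 + - (a1 * b1 - a2 * - b2)) +
               (0 + - (a1 * - b2 + a2 * b1)) * (0 + - (a1 * - b2 + a2 * b1))) in *.
    set (D2 := (1 + - (z1 * w1 - z2 * - w2)) * (1 + - (z1 * w1 - z2 * - w2)) +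
               (0 + - (z1 * - w2 + z2 * w1)) * (0 + - (z1 * - w2 + z2 * w1))) in *.
    assert (H1 : N2 * (P * Q) <= al * be * D2).
    { assert (E : al / P * (be / Q) = al * be / (P * Q)) by (field; lra). rewrite E in Hm.
      apply Rmult_le_reg_r with (/ D2 * / (P * Q)).
      apply Rmult_lt_0_compat; apply Rinv_0_lt_compat; nra.
      replace (N2 * (P * Q) * (/ D2 * / (P * Q))) with (N2 / D2) by (field; split; nra).
      replace (al * be * D2 * (/ D2 * / (P * Q))) with (al * be / (P * Q)) by (field; split; nra).
      exact Hm. }
    assert (I1 : N2 - al * be = (a1 + - b1) * (a1 + - b1) + (a2 + - b2) * (a2 + - b2)) by (unfold N2, al, be; ring).
    assert (I2 : D2 - P * Q = (z1 + - w1) * (z1 + - w1) + (z2 + - w2) * (z2 + - w2)) by (unfold D2, P, Q; ring).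
    assert (HN : N2 <= 4).
    { assert (E : N2 = 1 - 2 * (a1*b1+a2*b2) + (a1*a1+a2*a2)*(b1*b1+b2*b2)) by (unfold N2; ring).
      rewrite E. unfold al, be in *.
      pose proof (Rle_0_sqr (a1+b1)); pose proof (Rle_0_sqr (a2+b2)); unfold Rsqr in *.
      assert (0 <= a1*a1+a2*a2) by nra. assert (0 <= b1*b1+b2*b2) by nra.
      assert ((a1*a1+a2*a2)*(b1*b1+b2*b2) <= 1) by (apply Rle_trans with (1 * 1); [apply Rmult_le_compat; lra | lra]).
      lra. }
    assert (G0 : 0 <= D2 - P * Q) by (rewrite I2; apply Rplus_le_le_0_compat; apply Rle_0_sqr).
    rewrite <- I1, <- I2.
    clearbody N2 D2 P Q al be.
    assert (0 <= al * be) by (apply Rmult_le_pos; auto).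
    assert ((N2 - al * be) * D2 <= N2 * (D2 - P * Q)) by nra.
    assert (0 <= (4 - N2) * (D2 - P * Q)) by (apply Rmult_le_pos; lra).
    nra.
Qed.


Lemma n2_lt1 z : unit_disk z -> n2 z < 1.
Proof.
  unfold unit_disk, Cmod, n2. intro H.
  set (s := fst z ^ 2 + snd z ^ 2) in H.
  assert (0 <= s) by (unfold s; nra).
  pose proof (sqrt_sqrt s H0). pose proof (sqrt_pos s).
  replace (fst z * fst z + snd z * snd z) with s by (unfold s; ring). nra.
Qed.

Lemma Cmod_shift z t : Cmod (Cminus (Cplus z (RtoC t)) z) = Rabs t.
Proof.
  unfold Cmod. simpl. rewrite <- sqrt_Rsqr_abs. f_equal. unfold Rsqr. ring.
Qed.

Lemma Cmod_shift' z t : Cmod (Cminus z (Cplus z (RtoC t))) = Rabs t.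
Proof.
  unfold Cmod. simpl. rewrite <- sqrt_Rsqr_abs. f_equal. unfold Rsqr. ring.
Qed.

Lemma shift_neq z t : t <> 0 -> Cplus z (RtoC t) <> z.
Proof. intros H E. apply H. apply (f_equal fst) in E. simpl in E. lra. Qed.

Lemma shift_inj z t t' : Cplus z (RtoC t) = Cplus z (RtoC t') -> t = t'.
Proof. intros E. apply (f_equal fst) in E. simpl in E. lra. Qed.

Lemma shift0 z : Cplus z (RtoC 0) = z.
Proof. destruct z; unfold Cplus, RtoC; simpl; f_equal; ring. Qed.

Lemma ball_DZ (D Z : C -> Prop) : C_open D -> discrete_in D Z ->
  forall z, D z -> exists r, 0 < r /\ forall u, Cmod (Cminus u z) < r -> u <> z -> D u /\ ~ Z u.
Proof.
  intros Ho [_ [_ Hd]] z Hz.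
  destruct (Ho z Hz) as [r1 [Hr1 H1]]. destruct (Hd z Hz) as [r2 [Hr2 H2]].
  exists (Rmin r1 r2). split. apply Rmin_pos; auto.
  intros u Hu Hne. split.
  - apply H1. eapply Rlt_le_trans; [exact Hu| apply Rmin_l].
  - intro HZ. apply Hne. apply H2; auto. eapply Rlt_le_trans; [exact Hu| apply Rmin_r].
Qed.

Definition DZ (D Z : C -> Prop) (z : C) : Prop := D z /\ ~ Z z.

Definition pick_hyp k (D Z : C -> Prop) (f : C -> C) : Prop :=
  forall zs : nat -> C,
    (forall i, (i < k)%nat -> D (zs i) /\ ~ Z (zs i)) ->
    (forall i j, (i < k)%nat -> (j < k)%nat -> i <> j -> zs i <> zs j) ->
    psd k (pick_entry f zs).

Lemma Cmod_pos_neq a b : a <> b -> 0 < Cmod (Cminus b a).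
Proof.
  intro H. destruct (Rle_lt_dec (Cmod (Cminus b a)) 0) as [Hl|Hl]; auto.
  exfalso. assert (Cmod (Cminus b a) = 0) by (pose proof (Cmod_ge_0 (Cminus b a)); lra).
  apply Cmod_eq_0 in H0. apply H. destruct a, b; unfold Cminus, Cplus, Copp in H0; simpl in H0.
  injection H0; intros. f_equal; lra.
Qed.

Lemma pair_ineq k (D Z : C -> Prop) (f : C -> C) :
  (2 <= k)%nat -> C_open D -> (forall z, D z -> unit_disk z) -> discrete_in D Z ->
  pick_hyp k D Z f ->
  forall a b, DZ D Z a -> DZ D Z b ->
  n2 (Cminus (f a) (f b)) * n2 (Cminus 1 (Cmult a (Cconj b))) <= 4 * n2 (Cminus a b).
Proof.
  intros Hk Ho Hdisk Hdisc Hf a b [Da Za] [Db Zb].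
  destruct (classic (a = b)) as [E|Hab].
  { subst b. unfold n2. simpl. nra. }
  destruct (ball_DZ D Z Ho Hdisc a Da) as [r [Hr Hball]].
  pose proof (Cmod_pos_neq a b Hab) as Hba.
  set (eps := Rmin r (Cmod (Cminus b a)) / 2).
  assert (Heps : 0 < eps) by (unfold eps; apply Rmult_lt_0_compat; [apply Rmin_pos; auto | lra]).
  assert (Hepsr : eps < r) by (unfold eps; pose proof (Rmin_l r (Cmod (Cminus b a))); lra).
  assert (Hepsb : eps < Cmod (Cminus b a)) by (unfold eps; pose proof (Rmin_r r (Cmod (Cminus b a))); lra).
  set (t := fun i : nat => eps / (INR i + 3)).
  assert (Ht : forall i, 0 < t i /\ t i < eps).
  { intro i. pose proof (pos_INR i). unfold t. split.
    apply Rdiv_lt_0_compat; lra.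
    apply Rmult_lt_reg_r with (INR i + 3). lra. field_simplify; nra. }
  set (zs := fun i : nat => match i with O => a | 1%nat => b | S (S i) => Cplus a (RtoC (t i)) end).
  assert (Hin : forall i, DZ D Z (zs i)).
  { intros [|[|i]]; simpl; try (split; auto).
    destruct (Ht i) as [H1 H2]. apply Hball.
    rewrite Cmod_shift. rewrite Rabs_pos_eq; lra. apply shift_neq; lra.
    destruct (Ht i) as [H1 H2]. apply Hball.
    rewrite Cmod_shift. rewrite Rabs_pos_eq; lra. apply shift_neq; lra. }
  assert (Hdist : forall i j, i <> j -> zs i <> zs j).
  { assert (Hbs : forall i, b <> Cplus a (RtoC (t i))).
    { intros i E. destruct (Ht i). rewrite E in Hepsb. rewrite Cmod_shift in Hepsb.
      rewrite Rabs_pos_eq in Hepsb; lra. }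
    assert (Has : forall i, a <> Cplus a (RtoC (t i))).
    { intros i E. symmetry in E. revert E. apply shift_neq. destruct (Ht i); lra. }
    intros [|[|i]] [|[|j]] Hij; simpl;
      try (exfalso; apply Hij; reflexivity);
      try exact Hab; try (intro E; apply Hab; symmetry; exact E); try apply Has; try apply Hbs;
      try (intro E; apply (Has i); symmetry; exact E); try (intro E; apply (Hbs i); symmetry; exact E).
    intro E. apply shift_inj in E. unfold t in E. apply Hij. do 2 f_equal. apply INR_eq.
      pose proof (pos_INR i); pose proof (pos_INR j).
      unfold Rdiv in E. apply Rmult_eq_reg_l in E; [|lra].
      apply (f_equal Rinv) in E. rewrite !Rinv_inv in E. lra. }
  assert (Hp : psd k (pick_entry f zs)).
  { apply Hf. intros i _; apply Hin. intros i j _ _ Hij; apply Hdist; auto. }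
  pose proof (key_ineq k f zs Hk Hp) as K. simpl in K.
  apply K; apply n2_lt1, Hdisk; auto.
Qed.


Lemma re_lower z t t' : 0 < 1 - n2 z -> 0 <= t <= (1 - n2 z) / 4 -> 0 <= t' <= (1 - n2 z) / 4 ->
  ((1 - n2 z) / 4) * ((1 - n2 z) / 4) <= n2 (Cminus 1 (Cmult (Cplus z (RtoC t)) (Cconj (Cplus z (RtoC t'))))).
Proof.
  destruct z as [x y]. unfold n2; simpl. intros Hd Ht Ht'.
  set (d := 1 - (x*x+y*y)) in *.
  assert (Hx : x * x <= 1) by (unfold d in Hd; nra).
  assert (Hx' : -1 <= x <= 1) by nra.
  set (R0 := 1 + - ((x + t) * (x + t') - (y + 0) * - (y + 0))).
  assert (E : R0 = d - x * (t + t') - t * t') by (unfold R0, d; ring).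
  assert (HR : d / 4 <= R0).
  { rewrite E. assert (d <= 1) by (unfold d; nra).
    assert (x * (t + t') <= t + t') by nra. assert (t * t' <= d/4 * (d/4)) by nra.
    assert (d / 4 * (d / 4) <= d / 16) by nra. nra. }
  pose proof (Rle_0_sqr (0 + - ((x + t) * - (y + 0) + (y + 0) * (x + t')))). unfold Rsqr in *.
  fold R0. nra.
Qed.

Lemma sq_to_abs x s c : 0 <= c -> x * x * (c * c) <= 4 * (s * s) -> Rabs x * c <= 2 * Rabs s.
Proof.
  intros Hc H. pose proof (Rabs_pos x). pose proof (Rabs_pos s).
  assert (Rabs x * Rabs x = x * x) by (rewrite <- Rabs_mult; apply Rabs_pos_eq; nra).
  assert (Rabs s * Rabs s = s * s) by (rewrite <- Rabs_mult; apply Rabs_pos_eq; nra).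
  destruct (Rle_lt_dec (Rabs x * c) (2 * Rabs s)) as [L|L]; auto.
  exfalso. assert (0 <= Rabs x * c) by nra. nra.
Qed.

Lemma comp_bound k (D Z : C -> Prop) (f : C -> C) :
  (2 <= k)%nat -> C_open D -> (forall z, D z -> unit_disk z) -> discrete_in D Z ->
  pick_hyp k D Z f -> forall z t t',
  0 < 1 - n2 z -> 0 <= t <= (1 - n2 z) / 4 -> 0 <= t' <= (1 - n2 z) / 4 ->
  DZ D Z (Cplus z (RtoC t)) -> DZ D Z (Cplus z (RtoC t')) ->
  Rabs (fst (f (Cplus z (RtoC t))) - fst (f (Cplus z (RtoC t')))) * ((1 - n2 z) / 4) <= 2 * Rabs (t - t') /\
  Rabs (snd (f (Cplus z (RtoC t))) - snd (f (Cplus z (RtoC t')))) * ((1 - n2 z) / 4) <= 2 * Rabs (t - t').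
Proof.
  intros Hk Ho Hdisk Hdisc Hf z t t' Hd Ht Ht' H1 H2.
  pose proof (pair_ineq k D Z f Hk Ho Hdisk Hdisc Hf _ _ H1 H2) as P.
  pose proof (re_lower z t t' Hd Ht Ht') as L.
  set (c := (1 - n2 z) / 4) in *.
  assert (Hc : 0 <= c) by (unfold c; lra).
  set (u := f (Cplus z (RtoC t))) in *. set (v := f (Cplus z (RtoC t'))) in *.
  set (Dl := n2 (Cminus 1 (Cmult (Cplus z (RtoC t)) (Cconj (Cplus z (RtoC t')))))) in *.
  assert (En : n2 (Cminus (Cplus z (RtoC t)) (Cplus z (RtoC t'))) = (t - t') * (t - t'))
    by (unfold n2; simpl; ring).
  rewrite En in P.
  assert (Hn : n2 (Cminus u v) = (fst u - fst v) * (fst u - fst v) + (snd u - snd v) * (snd u - snd v))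
    by (unfold n2; simpl; ring).
  rewrite Hn in P.
  assert (G : n2 (Cminus u v) * (c * c) <= 4 * ((t - t') * (t - t'))).
  { rewrite Hn. assert (0 <= (fst u - fst v) * (fst u - fst v) + (snd u - snd v) * (snd u - snd v))
      by (apply Rplus_le_le_0_compat; apply Rle_0_sqr).
    assert (0 <= ((fst u - fst v) * (fst u - fst v) + (snd u - snd v) * (snd u - snd v)) * (Dl - c * c))
      by (apply Rmult_le_pos; lra).
    nra. }
  rewrite Hn in G.
  assert (0 <= (fst u - fst v) * (fst u - fst v) * (c * c)) by (apply Rmult_le_pos; apply Rle_0_sqr).
  assert (0 <= (snd u - snd v) * (snd u - snd v) * (c * c)) by (apply Rmult_le_pos; apply Rle_0_sqr).
  split; apply sq_to_abs; auto; lra.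
Qed.

Lemma ev_DZ (D Z : C -> Prop) : C_open D -> discrete_in D Z -> forall z, D z ->
  eventually (fun n => DZ D Z (Cplus z (RtoC (tt n)))).
Proof.
  intros Ho Hdisc z Hz. destruct (ball_DZ D Z Ho Hdisc z Hz) as [r [Hr Hb]].
  destruct (tt_small r Hr) as [N HN]. exists N. intros n Hn.
  pose proof (tt_pos n). apply Hb.
  - rewrite Cmod_shift, Rabs_pos_eq; [apply HN; auto | lra].
  - apply shift_neq; lra.
Qed.

Definition Fext (f : C -> C) (z : C) : C :=
  (real (Lim_seq (fun n => fst (f (Cplus z (RtoC (tt n)))))),
   real (Lim_seq (fun n => snd (f (Cplus z (RtoC (tt n))))))).

Lemma lim_of_cauchy u : ex_lim_seq_cauchy u -> is_lim_seq u (real (Lim_seq u)).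
Proof.
  intro H. apply ex_lim_seq_cauchy_corr in H. destruct H as [l Hl].
  rewrite (is_lim_seq_unique _ _ Hl). exact Hl.
Qed.

Lemma ev_good (D Z : C -> Prop) : C_open D -> discrete_in D Z -> (forall z, D z -> unit_disk z) ->
  forall z e, D z -> 0 < e ->
  eventually (fun n => tt n <= (1 - n2 z) / 4 /\ tt n < e /\ DZ D Z (Cplus z (RtoC (tt n)))).
Proof.
  intros Ho Hdisc Hdisk z e Hz He.
  pose proof (n2_lt1 z (Hdisk z Hz)).
  assert (Hq : 0 < (1 - n2 z)/4) by lra.
  destruct (filter_and _ _ (tt_small ((1 - n2 z)/4) Hq)
            (filter_and _ _ (tt_small e He) (ev_DZ D Z Ho Hdisc z Hz))) as [N HN].
  exists N. intros n Hn. destruct (HN n Hn) as [A1 [A2 A3]]. split; [lra | split; [exact A2 | exact A3]].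
Qed.

Lemma Fconv k (D Z : C -> Prop) (f : C -> C) :
  (2 <= k)%nat -> C_open D -> (forall z, D z -> unit_disk z) -> discrete_in D Z ->
  pick_hyp k D Z f -> forall z, D z ->
  Cconv (fun n => f (Cplus z (RtoC (tt n)))) (Fext f z).
Proof.
  intros Hk Ho Hdisk Hdisc Hf z Hz.
  pose proof (n2_lt1 z (Hdisk z Hz)) as Hz1.
  set (d := 1 - n2 z) in *.
  assert (Hd : 0 < d) by (unfold d; lra).
  assert (CA : forall eps : posreal, exists N, forall n m, (N <= n)%nat -> (N <= m)%nat ->
     Rabs (fst (f (Cplus z (RtoC (tt n)))) - fst (f (Cplus z (RtoC (tt m))))) < eps /\
     Rabs (snd (f (Cplus z (RtoC (tt n)))) - snd (f (Cplus z (RtoC (tt m))))) < eps).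
  { intros [e He]. simpl.
    assert (Hed : 0 < e * d / 16) by (apply Rmult_lt_0_compat; [apply Rmult_lt_0_compat|]; lra).
    destruct (ev_good D Z Ho Hdisc Hdisk z (e * d / 16) Hz Hed) as [N HN].
    exists N. intros n m Hn Hm. destruct (HN n Hn) as [B1 [B2 B3]]. destruct (HN m Hm) as [C1 [C2 C3]].
    pose proof (tt_pos n). pose proof (tt_pos m).
    assert (T1 : 0 <= tt n <= (1 - n2 z)/4) by (unfold d in *; lra).
    assert (T2 : 0 <= tt m <= (1 - n2 z)/4) by (unfold d in *; lra).
    destruct (comp_bound k D Z f Hk Ho Hdisk Hdisc Hf z (tt n) (tt m) Hd T1 T2 B3 C3)
      as [P1 P2]. fold d in P1, P2.
    assert (Rabs (tt n - tt m) < e * d / 16) by (apply Rabs_def1; lra).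
    split; nra. }
  split; unfold Fext; simpl; apply lim_of_cauchy; intros eps; destruct (CA eps) as [N HN];
    exists N; intros; apply HN; auto.
Qed.


Lemma Fext_eq k (D Z : C -> Prop) (f : C -> C) :
  (2 <= k)%nat -> C_open D -> (forall z, D z -> unit_disk z) -> discrete_in D Z ->
  pick_hyp k D Z f -> forall z, DZ D Z z -> Fext f z = f z.
Proof.
  intros Hk Ho Hdisk Hdisc Hf z Hz.
  pose proof (n2_lt1 z (Hdisk z (proj1 Hz))) as Hz1.
  set (d := 1 - n2 z) in *.
  assert (Hd : 0 < d) by (unfold d; lra).
  assert (CA : forall eps : posreal, exists N, forall n, (N <= n)%nat ->
     Rabs (fst (f (Cplus z (RtoC (tt n)))) - fst (f z)) < eps /\
     Rabs (snd (f (Cplus z (RtoC (tt n)))) - snd (f z)) < eps).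
  { intros [e He]. simpl.
    assert (Hed : 0 < e * d / 16) by (apply Rmult_lt_0_compat; [apply Rmult_lt_0_compat|]; lra).
    destruct (ev_good D Z Ho Hdisc Hdisk z (e * d / 16) (proj1 Hz) Hed) as [N HN].
    exists N. intros n Hn. destruct (HN n Hn) as [B1 [B2 B3]].
    pose proof (tt_pos n).
    assert (T1 : 0 <= tt n <= (1 - n2 z)/4) by (unfold d in *; lra).
    assert (T2 : 0 <= 0 <= (1 - n2 z)/4) by (unfold d in *; lra).
    assert (C3 : DZ D Z (Cplus z (RtoC 0))) by (rewrite shift0; exact Hz).
    destruct (comp_bound k D Z f Hk Ho Hdisk Hdisc Hf z (tt n) 0 Hd T1 T2 B3 C3)
      as [P1 P2]. fold d in P1, P2. rewrite shift0 in P1, P2.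
    rewrite Rminus_0_r, (Rabs_pos_eq (tt n)) in P1, P2 by lra.
    split; nra. }
  unfold Fext. apply injective_projections; simpl.
  - rewrite (is_lim_seq_unique _ (fst (f z))). reflexivity.
    apply is_lim_seq_spec. intros eps. destruct (CA eps) as [N HN]. exists N. intros n Hn; apply (proj1 (HN n Hn)).
  - rewrite (is_lim_seq_unique _ (snd (f z))). reflexivity.
    apply is_lim_seq_spec. intros eps. destruct (CA eps) as [N HN]. exists N. intros n Hn; apply (proj2 (HN n Hn)).
Qed.

Lemma ev_all (P : nat -> nat -> Prop) k :
  (forall i, (i < k)%nat -> eventually (P i)) -> eventually (fun n => forall i, (i < k)%nat -> P i n).
Proof.
  induction k; intros H.
  - exists 0%nat. intros; lia.
  - destruct (IHk (fun i Hi => H i ltac:(lia))) as [N1 H1].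
    destruct (H k ltac:(lia)) as [N2 H2].
    exists (max N1 N2). intros n Hn i Hi.
    destruct (Nat.eq_dec i k). subst; apply H2; lia. apply H1; lia.
Qed.

Lemma Cconv_tt : Cconv (fun n => RtoC (tt n)) 0%C.
Proof. split; simpl. apply tt_lim. apply is_lim_seq_const. Qed.


Theorem proposition6p1 (k : nat) (D Z : C -> Prop) :
  (3 <= k)%nat ->
  C_open D ->
  (forall z, D z -> unit_disk z) ->
  hindmarsh_property k D ->
  discrete_in D Z ->
  hindmarsh_property k (fun z => D z /\ ~ Z z).
Proof.
  intros Hk3 Ho Hdisk HH Hdisc f Hf0.
  assert (Hk : (2 <= k)%nat) by lia.
  assert (Hf : pick_hyp k D Z f).
  { intros zs H1 H2. apply Hf0; auto. }
  destruct (HH (Fext f)) as [S [HS HSF]].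
  - intros zs Hzs Hdist c.
    set (zn := fun n i => Cplus (zs i) (RtoC (tt n))).
    assert (Hev : eventually (fun n => psd k (pick_entry f (zn n)))).
    { destruct (ev_all (fun i n => DZ D Z (zn n i)) k) as [N HN].
      { intros i Hi. apply (ev_DZ D Z Ho Hdisc). auto. }
      exists N. intros n Hn. apply Hf.
      - intros i Hi. apply (HN n Hn i Hi).
      - intros i j Hi Hj Hij E. apply (Hdist i j Hi Hj Hij).
        unfold zn in E. apply (f_equal (fun u => Cminus u (RtoC (tt n)))) in E.
        destruct (zs i), (zs j). unfold Cminus, Cplus, Copp, RtoC in E. simpl in E.
        injection E; intros. f_equal; lra. }
    set (qn := fun n => csum k (fun i => csum k (fun j => Cmult (Cmult (Cconj (c i)) (pick_entry f (zn n) i j)) (c j)))).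
    set (q := csum k (fun i => csum k (fun j => Cmult (Cmult (Cconj (c i)) (pick_entry (Fext f) zs i j)) (c j)))).
    assert (Hconv : Cconv qn q).
    { unfold qn, q. apply Cconv_csum. intros i Hi. apply Cconv_csum. intros j Hj.
      apply Cconv_mult; [apply Cconv_mult|]; try apply Cconv_const.
      assert (Hz : forall l, (l < k)%nat -> Cconv (fun n => zn n l) (zs l)).
      { intros l Hl. unfold zn. pose proof (Cconv_plus _ _ _ _ (Cconv_const (zs l)) Cconv_tt) as W.
        rewrite Cplus_0_r in W. exact W. }
      assert (HF : forall l, (l < k)%nat -> Cconv (fun n => f (zn n l)) (Fext f (zs l))).
      { intros l Hl. apply (Fconv k D Z f Hk Ho Hdisk Hdisc Hf). auto. }
      unfold pick_entry. apply Cconv_div.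
      - apply Cconv_minus. apply Cconv_const. apply Cconv_mult; auto. apply Cconv_conj; auto.
      - apply Cconv_minus. apply Cconv_const. apply Cconv_mult; auto. apply Cconv_conj; auto.
      - apply nz_of_n2, Delta_pos; apply n2_lt1, Hdisk, Hzs; auto. }
    destruct Hconv as [HRe HIm].
    cbv zeta. fold q. split; unfold Im, Re.
    + assert (H0 : is_lim_seq (fun n => snd (qn n)) 0).
      { apply is_lim_seq_ext_loc with (fun _ => 0). 2: apply is_lim_seq_const.
        destruct Hev as [N HN]. exists N. intros n Hn. pose proof (HN n Hn c) as P. cbv zeta in P.
        unfold Im in P. symmetry. apply P. }
      apply is_lim_seq_unique in H0. apply is_lim_seq_unique in HIm. rewrite HIm in H0.
      injection H0; auto.
    + assert (L : Rbar_le 0 (snd (fst q, fst q))).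
      { apply (is_lim_seq_le_loc (fun _ => 0) (fun n => fst (qn n))). 2: apply is_lim_seq_const. 2: exact HRe.
        destruct Hev as [N HN]. exists N. intros n Hn. pose proof (HN n Hn c) as P. cbv zeta in P.
        unfold Re in P. apply P. }
      exact L.
  - exists S. split; auto. intros z Hz. rewrite HSF by apply Hz.
    apply (Fext_eq k D Z f Hk Ho Hdisk Hdisc Hf). exact Hz.
Qed.
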